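(* Let $n\ge2$ and $q_1,q_2\in\mathbb{C}$ with $q_1q_2\ne0$, put $q=-q_2/q_1$, and assume $[n]_q=1+q+\cdots+q^{n-1}\ne0$. Then the algebra $\operatorname{End}_{B_n}(\mathbf{E})$ of linear endomorphisms of $\mathbf{E}$ commuting with the generalized Burau action of $B_n$ is spanned by the identity operator $\mathrm{id}_{\mathbf{E}}$ and the operator $P$ whose matrix with respect to $e_1,\dots,e_n$ is the $n\times n$ matrix all of whose rows equal $(1,q,q^2,\dots,q^{n-1})$.
   Context: Artin's braid group $B_n$ has generators $\sigma_1,\dots,\sigma_{n-1}$ with relations $\sigma_i\sigma_{i+1}\sigma_i=\sigma_{i+1}\sigma_i\sigma_{i+1}$, $\sigma_i\sigma_j=\sigma_j\sigma_i$ ($|i-j|>1$). $\mathbf{E}=\mathbb{C}^n$ with basis $e_1,\dots,e_n$; the generalized Burau representation is $\sigma_ie_j=q_1e_j$ ($j\ne i,i+1$), $\sigma_ie_{i+1}=-q_2e_i$, $\sigma_ie_i=(q_1+q_2)e_i+q_1e_{i+1}$. *)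

(* Defs.v *)
(* The complex numbers are modelled as R[i] = complex R
   for an arbitrary realType R (every realType is the field of real numbers). *)
From HB Require Import structures.
From mathcomp Require Import all_boot all_order all_algebra.
From mathcomp Require Import reals.
From mathcomp.real_closed Require Import complex.
Set Implicit Arguments. Unset Strict Implicit. Unset Printing Implicit Defensive.
Import Order.TTheory GRing.Theory Num.Theory.
Local Open Scope ring_scope.

(* Matrix of the generalized Burau generator sigma_{i+1} (0-based index i,
   with i.+1 < n) on E = C^n, w.r.t. the basis e_1..e_n, acting on column
   vectors: column j is the coordinate vector of sigma e_j.
     sigma_i e_j     = q1 e_j               (j <> i, i+1)
     sigma_i e_{i+1} = - q2 e_i
     sigma_i e_i     = (q1 + q2) e_i + q1 e_{i+1}                       *)
Definition burau_gen (F : nzRingType) (n : nat) (q1 q2 : F) (i : nat)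
  : 'M[F]_n :=
  \matrix_(k < n, j < n)
    (if (j : nat) == i then
       (if (k : nat) == i then q1 + q2 else if (k : nat) == i.+1 then q1 else 0)
     else if (j : nat) == i.+1 then
       (if (k : nat) == i then - q2 else 0)
     else (if k == j then q1 else 0)).

(* End_{B_n}(E): endomorphisms commuting with the action of every generator
   sigma_1, ..., sigma_{n-1} (equivalently with all of B_n). *)
Definition commutes_with_burau (F : nzRingType) (n : nat) (q1 q2 : F)
  (A : 'M[F]_n) : Prop :=
  forall i : nat, (i.+1 < n)%N -> A *m burau_gen n q1 q2 i = burau_gen n q1 q2 i *m A.

Definition Pmx (F : nzRingType) (n : nat) (q : F) : 'M[F]_n :=
  \matrix_(k < n, j < n) q ^+ j.

Definition qint (F : nzRingType) (n : nat) (q : F) : F := \sum_(i < n) q ^+ i.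

(* Main.v *)
Require Import Defs.
From HB Require Import structures.
From mathcomp Require Import all_boot all_order all_algebra zify ring.
Set Implicit Arguments. Unset Strict Implicit. Unset Printing Implicit Defensive.
Import Order.TTheory GRing.Theory Num.Theory.
Local Open Scope ring_scope.

Lemma sum_one (F : nmodType) n (f : 'I_n -> F) j :
  (forall l, l != j -> f l = 0) -> \sum_l f l = f j.
Proof. by move=> H; rewrite (bigD1 j) //= big1 ?addr0. Qed.

Lemma sum_two (F : nmodType) n (f : 'I_n -> F) a b : a != b ->
  (forall l, l != a -> l != b -> f l = 0) -> \sum_l f l = f a + f b.
Proof.
move=> ab H; rewrite (bigD1 a) //= (bigD1 b) 1?eq_sym //= big1 ?addr0 //.
by move=> l /andP[]; apply: H.
Qed.

Lemma SnF m : (m.+1 == m) = false. Proof. by elim: m. Qed.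
Lemma nSF m : (m == m.+1) = false. Proof. by elim: m. Qed.

Section S.
Variables (F : comNzRingType) (n : nat) (q1 q2 : F) (i0 i1 : 'I_n).
Hypothesis Hi : (i1 : nat) = i0.+1.
Let B := burau_gen n q1 q2 i0.

Lemma i01 : i0 != i1.
Proof. apply/eqP => e; move: Hi; rewrite e; lia. Qed.

Lemma AB_other (A : 'M[F]_n) (k j : 'I_n) : (j:nat) != i0 -> (j:nat) != i1 ->
  (A *m B) k j = A k j * q1.
Proof.
move=> h0 h1; rewrite mxE (sum_one (j:=j)) => [|l hl]; rewrite /B !mxE (negbTE h0) -Hi (negbTE h1) ?eqxx //.
by rewrite (negbTE hl) mulr0.
Qed.

Lemma AB_i0 (A : 'M[F]_n) (k : 'I_n) : (A *m B) k i0 = A k i0 * (q1+q2) + A k i1 * q1.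
Proof.
rewrite mxE (sum_two i01); last first.
  move=> l h0 h1; rewrite !mxE eqxx.
  rewrite -val_eqE /= in h0; rewrite -val_eqE /= Hi in h1.
  by rewrite (negbTE h0) (negbTE h1) mulr0.
by rewrite /B !mxE !eqxx Hi eqxx SnF.
Qed.

Lemma AB_i1 (A : 'M[F]_n) (k : 'I_n) : (A *m B) k i1 = A k i0 * (- q2).
Proof.
rewrite mxE (sum_one (j:=i0)) => [|l hl]; rewrite /B !mxE Hi eqxx SnF ?eqxx //.
by rewrite -val_eqE /= in hl; rewrite (negbTE hl) mulr0.
Qed.

Lemma BA_other (A : 'M[F]_n) (k j : 'I_n) : (k:nat) != i0 -> (k:nat) != i1 ->
  (B *m A) k j = q1 * A k j.
Proof.
move=> h0 h1; rewrite mxE (sum_one (j:=k)) => [|l hl].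
  by rewrite /B !mxE (negbTE h0) -Hi (negbTE h1) eqxx.
rewrite /B !mxE (negbTE h0) -Hi (negbTE h1).
case: ifP => _; first by rewrite mul0r.
case: ifP => _; first by rewrite mul0r.
by rewrite eq_sym (negbTE hl) mul0r.
Qed.

Lemma BA_i0 (A : 'M[F]_n) (j : 'I_n) :
  (B *m A) i0 j = (q1 + q2) * A i0 j + (- q2) * A i1 j.
Proof.
rewrite mxE (sum_two i01); last first.
  move=> l h0 h1; rewrite /B !mxE eqxx.
  rewrite -val_eqE /= in h0; rewrite -val_eqE /= Hi in h1.
  by rewrite (negbTE h0) (negbTE h1) -val_eqE /= eq_sym (negbTE h0) mul0r.
by rewrite /B !mxE !eqxx Hi eqxx SnF.
Qed.

Lemma BA_i1 (A : 'M[F]_n) (j : 'I_n) : (B *m A) i1 j = q1 * A i0 j.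
Proof.
rewrite mxE (sum_one (j:=i0)) => [|l hl]; rewrite /B !mxE Hi eqxx ?SnF ?eqxx //.
rewrite -val_eqE /= in hl; rewrite (negbTE hl).
case: ifP => h2; first by rewrite mul0r.
by rewrite -val_eqE /= Hi eq_sym h2 mul0r.
Qed.
End S.


Section Main.
Variables (F : fieldType) (m : nat) (q1 q2 : F).
Hypothesis q1N0 : q1 != 0.
Hypothesis q2N0 : q2 != 0.
Let n := m.+1.

Lemma inordV k : (k <= m)%N -> ((inord k : 'I_n) : nat) = k.
Proof. by move=> h; rewrite inordK. Qed.

Lemma eqs (D : 'M[F]_n) : commutes_with_burau q1 q2 D -> forall i, (i < m)%N ->
   [/\ forall k : 'I_n, (k:nat) != i -> (k:nat) != i.+1 ->
          q1 * D k (inord i.+1) = D k (inord i) * - q2,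
       q1 * D (inord i) (inord i.+1) = D (inord i.+1) (inord i) * - q2,
       D (inord i.+1) (inord i) * (q1 + q2) + D (inord i.+1) (inord i.+1) * q1
          = q1 * D (inord i) (inord i) &
       forall j : 'I_n, (j:nat) != i -> (j:nat) != i.+1 ->
          D (inord i) j * q1 = (q1 + q2) * D (inord i) j + - q2 * D (inord i.+1) j].
Proof.
move=> hc i hi.
have Hi : ((inord i.+1 : 'I_n) : nat) = (inord i : 'I_n).+1.
  by rewrite !inordV // ltnW.
have E0 : ((inord i : 'I_n) : nat) = i by rewrite inordV // ltnW.
have E1 : ((inord i.+1 : 'I_n) : nat) = i.+1 by rewrite inordV.
have H : D *m burau_gen n q1 q2 (inord i : 'I_n) = burau_gen n q1 q2 (inord i : 'I_n) *m D.
  by rewrite E0; apply: hc.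
split.
- move=> k h0 h1.
  have E := congr1 (fun M : 'M[F]_n => M k (inord i.+1)) H.
  rewrite /= (AB_i1 q1 q2 Hi) in E; rewrite (BA_other q1 q2 Hi) in E.
  - by rewrite -E.
  - by rewrite E0.
  - by rewrite E1.
- have E := congr1 (fun M : 'M[F]_n => M (inord i.+1) (inord i.+1)) H.
  rewrite /= (AB_i1 q1 q2 Hi) (BA_i1 q1 q2 Hi) in E.
  by rewrite E.
- have E := congr1 (fun M : 'M[F]_n => M (inord i.+1) (inord i)) H.
  rewrite /= (AB_i0 q1 q2 Hi) (BA_i1 q1 q2 Hi) in E.
  by rewrite E.
- move=> j h0 h1.
  have E := congr1 (fun M : 'M[F]_n => M (inord i) j) H.
  rewrite /= (BA_i0 q1 q2 Hi) in E; rewrite (AB_other q1 q2 Hi) in E.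
  - by rewrite E.
  - by rewrite E0.
  - by rewrite E1.
Qed.

Lemma zero_lemma (D : 'M[F]_n) : commutes_with_burau q1 q2 D ->
  D (inord 0) (inord 0) = 0 -> D (inord 1) (inord 0) = 0 -> D = 0.
Proof.
move=> hc d00 d10.
have col0 : forall k, (k <= m)%N -> D (inord k) (inord 0) = 0.
  elim=> [|k IH] hk; first done.
  case: k IH hk => [|k] IH hk; first done.
  have [_ _ _ ha] := eqs hc hk.
  have := ha (inord 0); rewrite inordV // => /(_ isT isT).
  rewrite IH ?(ltnW hk) // mul0r mulr0 add0r => /esym/eqP.
  by rewrite mulf_eq0 oppr_eq0 (negbTE q2N0) /= => /eqP.
have colS : forall j, (j <= m)%N -> forall k, (k <= m)%N -> D (inord k) (inord j) = 0.
  elim=> [|j IH] hj k hk; first exact: col0.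
  have [hb hc' he _] := eqs hc hj.
  have Ej := IH (ltnW hj).
  case: (eqVneq k j) => [->|kj].
    move: hc'; rewrite Ej // mul0r => /eqP.
    by rewrite mulf_eq0 (negbTE q1N0) /= => /eqP.
  case: (eqVneq k j.+1) => [->|kj1].
    move: he; rewrite !Ej ?(ltnW hj) // mul0r mulr0 add0r => /eqP.
    by rewrite mulf_eq0 (negbTE q1N0) orbF => /eqP.
  have := hb (inord k); rewrite inordV // => /(_ kj kj1).
  rewrite Ej // mul0r => /eqP.
  by rewrite mulf_eq0 (negbTE q1N0) /= => /eqP.
apply/matrixP => k j; rewrite mxE -(inord_val k) -(inord_val j).
by apply: colS; rewrite -ltnS.
Qed.
End Main.

Lemma P_comm (F : fieldType) (n : nat) (q1 q2 : F) i : q1 != 0 -> (i.+1 < n)%N ->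
  Pmx n (- q2 / q1) *m burau_gen n q1 q2 i = q1 *: Pmx n (- q2 / q1) /\
  burau_gen n q1 q2 i *m Pmx n (- q2 / q1) = q1 *: Pmx n (- q2 / q1).
Proof.
move=> q1N0 hi.
set q := - q2 / q1.
have hq : q * q1 = - q2 by rewrite /q divfK.
pose i0 : 'I_n := Ordinal (ltnW hi).
pose i1 : 'I_n := Ordinal hi.
have Hi : (i1 : nat) = i0.+1 by [].
have -> : burau_gen n q1 q2 i = burau_gen n q1 q2 i0 by [].
split; apply/matrixP => k j.
- case: (eqVneq (j:nat) i0) => [e|h0].
    have -> : j = i0 by apply: val_inj.
    rewrite (AB_i0 q1 q2 Hi) !mxE Hi exprSr -mulrA hq; ring.
  case: (eqVneq (j:nat) i1) => [e|h1].
    have -> : j = i1 by apply: val_inj.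
    rewrite (AB_i1 q1 q2 Hi) !mxE Hi exprSr -hq; ring.
  by rewrite (AB_other q1 q2 Hi) // !mxE mulrC.
- case: (eqVneq (k:nat) i0) => [e|h0].
    have -> : k = i0 by apply: val_inj.
    rewrite (BA_i0 q1 q2 Hi) !mxE; ring.
  case: (eqVneq (k:nat) i1) => [e|h1].
    have -> : k = i1 by apply: val_inj.
    by rewrite (BA_i1 q1 q2 Hi) !mxE.
  by rewrite (BA_other q1 q2 Hi) // !mxE.
Qed.

Lemma C_comm (F : fieldType) (n : nat) (q1 q2 : F) (a b : F) : q1 != 0 ->
  commutes_with_burau q1 q2 (a%:M + b *: Pmx n (- q2 / q1)).
Proof.
move=> q1N0 i hi; have [h1 h2] := P_comm q2 q1N0 hi.
by rewrite mulmxDl mulmxDr mul_scalar_mx mul_mx_scalar -scalemxAl -scalemxAr h1 h2.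
Qed.
Lemma main_dir (F : fieldType) (m : nat) (q1 q2 : F) (A : 'M[F]_m.+2) :
  q1 != 0 -> q2 != 0 -> commutes_with_burau q1 q2 A ->
  exists a b : F, A = a%:M + b *: Pmx m.+2 (- q2 / q1).
Proof.
move=> q1N0 q2N0 hc.
pose b := A (inord 1) (inord 0).
pose a := A (inord 0) (inord 0) - b.
pose C := a%:M + b *: Pmx m.+2 (- q2 / q1).
exists a, b.
have CC : commutes_with_burau q1 q2 C by apply: C_comm.
have DC : commutes_with_burau q1 q2 (A - C).
  by move=> i hi; rewrite mulmxBl mulmxBr hc // CC.
have i10 : (inord 1 : 'I_m.+2) != inord 0 by rewrite -val_eqE /= !inordK.
have H := zero_lemma q1N0 q2N0 DC.
apply/eqP; rewrite -subr_eq0; apply/eqP/H.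
  rewrite !mxE eqxx /= inordK // expr0 mulr1 mulr1n /a subrK; exact: subrr.
rewrite !mxE (negbTE i10) /= inordK // expr0 mulr1 mulr0n add0r; exact: subrr.
Qed.

From mathcomp Require Import reals.
From mathcomp.real_closed Require Import complex.
Local Open Scope complex_scope.

Theorem theorem4p1 (R : realType) (n : nat) (q1 q2 : R[i]) :
  (2 <= n)%N -> q1 * q2 != 0 ->
  qint n (- q2 / q1) != 0 ->
  forall A : 'M[R[i]]_n,
    commutes_with_burau q1 q2 A <->
    exists a b : R[i], A = a%:M + b *: Pmx n (- q2 / q1).
Proof.
move=> hn hq _ A.
have q1N0 : q1 != 0 by move: hq; rewrite mulf_eq0 negb_or => /andP[].
have q2N0 : q2 != 0 by move: hq; rewrite mulf_eq0 negb_or => /andP[].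
split; last by move=> [a [b ->]]; apply: C_comm.
case: n hn A => [|[|m]] // _ A hc.
exact: main_dir.
Qed.
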